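(* With $B_n,P_n$ as in the context, let $L_n=|B_n|$, $c_n$ the number of $1$'s in $B_n$, $m_n=|P_n|$ and $o_n$ the number of $1$'s in $P_n$. Assume that the limit $d=\lim_{n\to\infty}c_n/L_n$ exists and $d\neq 1/2$. Then the limit $\delta=\lim_{n\to\infty}o_n/m_n$ exists and $\delta=d$.
   Context: Generation operator: for a finite vector $R=\langle r_1,\dots,r_m\rangle$ of positive integers and $s\in\{1,3\}$, $\mathcal{G}(R,s)= s^{r_1}\,(4-s)^{r_2}\,s^{r_3}\cdots$ (the $i$-th run consists of $r_i$ copies of $s$ if $i$ is odd and of $4-s$ if $i$ is even), of length $\sum_i r_i$. For a finite word $W$ over $\{1,3\}$, $R(W)$ denotes $W$ itself regarded as a vector of positive integers. Define $B_1=\mathcal{G}(\langle 1,3,3,3,1\rangle,1)=1\,3\,3\,3\,1\,1\,1\,3\,3\,3\,1$, $P_1=3$, and for $n\ge1$: $B_{n+1}=B_n\,P_n\,B_n$ (concatenation), $P_{n+1}=\mathcal{G}(R(P_n),3)$. *)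

(* Defs.v *)
From mathcomp Require Import all_boot.
Set Implicit Arguments. Unset Strict Implicit. Unset Printing Implicit Defensive.

(* Generation operator G(R,s): the i-th run (1-indexed) has r_i copies of s if i
   is odd and of 4-s if i is even. Words over {1,3} are seq nat; R(W) is W itself. *)
Fixpoint gen (R : seq nat) (s : nat) : seq nat :=
  match R with
  | [::] => [::]
  | r :: R' => nseq r s ++ gen R' (4 - s)
  end.

Definition B1 : seq nat := gen [:: 1; 3; 3; 3; 1] 1.

(* BP k = (B_{k+1}, P_{k+1}) : index shifted by one so that k ranges over nat. *)
Fixpoint BP (k : nat) : seq nat * seq nat :=
  match k with
  | 0 => (B1, [:: 3])
  | k'.+1 => let: (b, p) := BP k' in (b ++ p ++ b, gen p 3)
  end.

Definition Bw (k : nat) : seq nat := (BP k).1.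
Definition Pw (k : nat) : seq nat := (BP k).2.

Definition Ln (k : nat) : nat := size (Bw k).
Definition cn (k : nat) : nat := count_mem 1 (Bw k).
Definition mn (k : nat) : nat := size (Pw k).
Definition on (k : nat) : nat := count_mem 1 (Pw k).

Lemma B1_eq : B1 = [:: 1; 3; 3; 3; 1; 1; 1; 3; 3; 3; 1].
Proof. by []. Qed.

(* Main.v *)
Require Import Defs.
From mathcomp Require Import all_boot zify.

Lemma gen_cat a b s : s <= 4 ->
  gen (a ++ b) s = gen a s ++ gen b (if odd (size a) then 4 - s else s).
Proof.
elim: a s => [|x a IH] s hs //=.
rewrite IH ?leq_subr // -catA; congr (_ ++ _ ++ gen b _).
by case: (odd (size a)); rewrite //= subKn.
Qed.

Lemma PwS k : Pw k.+1 = gen (Pw k) 3.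
Proof. by rewrite /Pw /=; case: (BP k). Qed.

Lemma BwS k : Bw k.+1 = Bw k ++ Pw k ++ Bw k.
Proof. by rewrite /Bw /Pw /=; case: (BP k). Qed.

Definition Rec k := Pw k.+3 = Pw k.+2 ++ 1 :: Pw k ++ 1 :: Pw k.+2.

Lemma recQ k : [/\ Rec k, odd (size (Pw k)), odd (size (Pw k.+1)) & odd (size (Pw k.+2))].
Proof.
elim: k => [|k [IH o0 o1 o2]]; first by split; vm_compute.
have o3 : odd (size (Pw k.+3)).
  by rewrite IH size_cat /= size_cat /= !oddD /= oddD /= o0 o2.
split => //.
rewrite /Rec PwS IH gen_cat // o2 /= PwS gen_cat // o0 /= -!PwS.
by rewrite -IH.
Qed.

Lemma Bw_eq k : Bw k = 1 :: Pw k.+2 ++ [:: 1].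
Proof.
elim: k => [|k IH]; first by vm_compute.
have [R _ _ _] := recQ k.
by rewrite BwS IH R /= -!catA /= -!catA.
Qed.

Lemma mn_eq k : mn k.+2 = (Ln k - 2)%N.
Proof. by rewrite /mn /Ln Bw_eq /= size_cat /= addn1 subn2. Qed.

Lemma on_eq k : on k.+2 = (cn k - 2)%N.
Proof. rewrite /on /cn Bw_eq /= count_cat /= addn0 add1n addn1 subn2 /=. by []. Qed.

Lemma Ln_ge k : k + 11 <= Ln k.
Proof.
elim: k => [|k IH]; first by [].
rewrite /Ln BwS !size_cat -/(Ln k). lia.
Qed.

Lemma cn_le k : cn k <= Ln k.
Proof. exact: count_size. Qed.
Lemma mn_eq' k : Nat.add (mn k.+2) 2 = Ln k.
Proof. have := Ln_ge k; rewrite mn_eq; lia. Qed.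
Lemma on_eq' k : Nat.add (on k.+2) 2 = cn k.
Proof.
have : 2 <= cn k.
  by rewrite /cn Bw_eq /= count_cat /= addn0 add1n addn1.
rewrite on_eq; lia.
Qed.

From Stdlib Require Import Reals Lra Psatz.
Open Scope R_scope.
Lemma diff_bound c L : 0 <= c <= L -> 3 <= L ->
  Rabs ((c - 2) / (L - 2) - c / L) <= 2 / (L - 2).
Proof.
intros [h0 h1] h3.
replace ((c - 2) / (L - 2) - c / L) with ((2 / (L - 2)) * ((c - L) / L)) by (field; lra).
rewrite Rabs_mult. rewrite (Rabs_right (2 / (L-2))).
2: { apply Rle_ge, Rlt_le, Rdiv_lt_0_compat; lra. }
rewrite <- (Rmult_1_r (2 / (L - 2))) at 2.
apply Rmult_le_compat_l. { apply Rlt_le, Rdiv_lt_0_compat; lra. }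
rewrite Rabs_left1.
2: { unfold Rdiv. assert (0 < / L) by (apply Rinv_0_lt_compat; lra). nra. }
replace (- ((c - L) / L)) with (1 - c / L) by (field; lra).
assert (0 <= c / L) by (unfold Rdiv; assert (0 < / L) by (apply Rinv_0_lt_compat; lra); nra).
lra.
Qed.

Theorem theorem5p3 (d : R) :
  Un_cv (fun k => INR (cn k) / INR (Ln k)) d ->
  d <> 1 / 2 ->
  Un_cv (fun k => INR (on k) / INR (mn k)) d.
Proof.
intros Hu _ eps Heps.
destruct (Hu (eps/2)) as [N1 HN1]; [lra|].
destruct (archimed_cor1 (eps/4)) as [N2 [HN2 HN2']]; [lra|].
exists (N1 + N2 + 2)%nat. intros n Hn.
destruct n as [|[|k]]; try lia.
assert (Hk1 : (N1 <= k)%coq_nat) by lia.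
assert (Hk2 : (N2 <= k)%coq_nat) by lia.
specialize (HN1 k Hk1). unfold R_dist in *.
assert (E1 : INR (mn (S (S k))) = INR (Ln k) - 2).
{ rewrite -(mn_eq' k) plus_INR. simpl. lra. }
assert (E2 : INR (on (S (S k))) = INR (cn k) - 2).
{ rewrite -(on_eq' k) plus_INR. simpl. lra. }
rewrite E1 E2.
assert (HL : INR k + 11 <= INR (Ln k)).
{ pose proof (le_INR _ _ (elimT leP (Ln_ge k))) as H. rewrite plus_INR in H. simpl in H. lra. }
assert (Hc : INR (cn k) <= INR (Ln k)).
{ apply le_INR. apply/leP. exact: cn_le. }
assert (Hc0 := pos_INR (cn k)).
assert (Hk0 := pos_INR k).
assert (HN2k : INR N2 <= INR k) by (apply le_INR; lia).
assert (HN20 : 0 < INR N2) by (apply lt_0_INR; lia).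
pose proof (@diff_bound (INR (cn k)) (INR (Ln k)) (conj Hc0 Hc) ltac:(lra)) as DB.
assert (B : 2 / (INR (Ln k) - 2) < eps / 2).
{ apply Rle_lt_trans with (2 / INR N2).
  - unfold Rdiv. apply Rmult_le_compat_l; [lra|]. apply Rinv_le_contravar; lra.
  - unfold Rdiv in *. lra. }
eapply Rle_lt_trans.
{ replace ((INR (cn k) - 2) / (INR (Ln k) - 2) - d) with
   (((INR (cn k) - 2) / (INR (Ln k) - 2) - INR (cn k) / INR (Ln k)) + (INR (cn k) / INR (Ln k) - d)) by ring.
  apply Rabs_triang. }
lra.
Qed.
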